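(* Consider the linear family $F_\theta=\theta^\top\psi$, $\theta\in\Theta\subset\mathbb R^d$, and assume (A2) and (A4). Let $\Gamma_0(\theta)=\Lambda_0(F_\theta)-\pi^1(F_\theta)$ and $\Gamma(\theta)=\Gamma_0(\theta)+\tfrac12(v^\top\theta)^2$. Let $\theta^\circ$ be a minimizer of $\Gamma$, let $r^\circ=\varrho_a-\Lambda_0(F_{\theta^\circ})$ and $\theta^*=\theta^\circ+r^\circ v$, and suppose $\theta^*\in\Theta$. Then $\theta^*$ is a global minimizer over $\Theta$ of $\theta\mapsto\bar J^*_\infty(\kappa;\theta)$, for every $\kappa>1$.
   Context: Setting: $(\mathsf Y,\mathcal B)$ measurable space; $X^0,X^1$ mutually independent stationary $\mathsf Y$-valued processes with marginals $\pi^0,\pi^1$, independent of a change time $\tau_a$; $\nu(G)=\int G\,d\nu$. $\Lambda_0(G)=\lim_n\frac1n\log E[\exp(\sum_{k=0}^{n-1}G(X^0_k))]$. $\psi=(\psi^1,\dots,\psi^d):\mathsf Y\to\mathbb R^d$ is a fixed measurable function. (A2): for some $\varrho_a\in(0,\infty)$, $\lim_n\frac1n\log P\{\tau_a\ge n\}=-\varrho_a$. (A3) for a function $F$: with $\Upsilon_0(\vartheta)=\Lambda_0(\vartheta F)$, $F$ belongs to the class $\mathcal G$ (functions for which the cumulant generating functions for $X^0,X^1$ exist finitely and the twisted marginals, twisted processes and relative entropy rates exist); there exist $\vartheta_+>\vartheta_0>0$ with $\Upsilon_0(\vartheta_0)=0$, $\Upsilon_0(\vartheta_+)=\varrho_a$;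 $\Upsilon_0$ is finite and $C^1$ near $[0,\vartheta_+]$; $\vartheta F\in\mathcal G$ for $\vartheta$ near $[0,\vartheta_+]$. (A4) for the family $\{F_\theta\}$: $\Theta$ is open and $F_\theta$ satisfies (A3) for each $\theta$; (i) $\psi_\theta=\nabla_\theta F_\theta$ (here $=\psi$) has components in $\mathcal G$; (ii) $(\vartheta,\theta)\mapsto\Lambda_0(\vartheta F_\theta)$ is $C^1$ on a neighborhood of $\{(\vartheta,\theta):\vartheta\in[0,\vartheta_+^\theta],\theta\in\Theta\}$; (iii) there is $v\in\mathbb R^d$ with $v^\top\psi\equiv1$. Notation: $\vartheta_+^\theta>\vartheta_0^\theta>0$ solve $\Lambda_0(\vartheta_0^\theta F_\theta)=0$, $\Lambda_0(\vartheta_+^\theta F_\theta)=\varrho_a$; $m_1^\theta=\pi^1(F_\theta)$ (assumed positive); $\bar J^*_\infty(\kappa;\theta)=\frac{1}{m_1^\theta\vartheta_+^\theta}\log\kappa$. *)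

(* Defs.v *)
From HB Require Import structures.
From mathcomp Require Import all_boot all_order all_algebra.
From mathcomp Require Import all_classical all_reals all_analysis.
Set Implicit Arguments. Unset Strict Implicit. Unset Printing Implicit Defensive.
Import Order.TTheory GRing.Theory Num.Theory.
Import numFieldNormedType.Exports.
Local Open Scope classical_set_scope.
Local Open Scope ring_scope.

Section Defs.
Context {R : realType} {dO : measure_display} {Omega : measurableType dO}
  (P : probability Omega R) {dY : measure_display} {Y : measurableType dY}.

Definition cyl (X : nat -> Omega -> Y) (m n : nat) (A : nat -> set Y) : set Omega :=
  [set w | forall i, (i < n)%N -> A i (X (m + i)%N w)].

Definition stationary (X : nat -> Omega -> Y) : Prop :=
  forall (m n : nat) (A : nat -> set Y), (forall i, measurable (A i)) ->
    P (cyl X m n A) = P (cyl X 0 n A).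

Definition mutually_independent (X0 X1 : nat -> Omega -> Y) (tau : Omega -> nat) : Prop :=
  forall (n : nat) (A B : nat -> set Y) (C : set nat),
    (forall i, measurable (A i)) -> (forall i, measurable (B i)) ->
    P (cyl X0 0 n A `&` cyl X1 0 n B `&` (tau @^-1` C))
    = (P (cyl X0 0 n A) * P (cyl X1 0 n B) * P (tau @^-1` C))%E.

Definition marg (X : nat -> Omega -> Y) (G : Y -> R) : R :=
  fine (\int[P]_w (G (X 0%N w))%:E).

Definition marg_integrable (X : nat -> Omega -> Y) (G : Y -> R) : Prop :=
  P.-integrable setT (fun w => (G (X 0%N w))%:E).

Definition mgf_n (X : nat -> Omega -> Y) (G : Y -> R) (n : nat) : \bar R :=
  \int[P]_w (expR (\sum_(k < n) G (X k w)))%:E.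

Definition cgf_seq (X : nat -> Omega -> Y) (G : Y -> R) (n : nat) : R :=
  ln (fine (mgf_n X G n)) / n%:R.

Definition cgf_exists (X : nat -> Omega -> Y) (G : Y -> R) : Prop :=
  (\forall n \near \oo, (mgf_n X G n < +oo)%E) /\ cvgn (cgf_seq X G).

Definition cgf (X : nat -> Omega -> Y) (G : Y -> R) : R := limn (cgf_seq X G).

(* The class G: cumulant generating functions for X0, X1 exist finitely,
   the marginal integrals are defined, and the remaining (twisting / entropy)
   requirements are abstracted by the predicate Gextra. *)
Definition inG (Gextra : (Y -> R) -> Prop) (X0 X1 : nat -> Omega -> Y) (G : Y -> R) : Prop :=
  measurable_fun setT G /\ cgf_exists X0 G /\ cgf_exists X1 G /\
  marg_integrable X0 G /\ marg_integrable X1 G /\ Gextra G.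

Definition scalef (t : R) (F : Y -> R) : Y -> R := fun y => t * F y.

Definition is_tplus (X0 : nat -> Omega -> Y) (rho : R) (F : Y -> R) (t : R) : Prop :=
  exists t0, 0 < t0 /\ t0 < t /\
    cgf_exists X0 (scalef t0 F) /\ cgf X0 (scalef t0 F) = 0 /\
    cgf_exists X0 (scalef t F) /\ cgf X0 (scalef t F) = rho.

Definition A3 (Gextra : (Y -> R) -> Prop) (X0 X1 : nat -> Omega -> Y) (rho : R)
  (F : Y -> R) : Prop :=
  inG Gextra X0 X1 F /\
  exists tp, is_tplus X0 rho F tp /\
  exists eps : R, 0 < eps /\
    let Ups := fun t => cgf X0 (scalef t F) in
    (forall t, - eps < t < tp + eps ->
       [/\ cgf_exists X0 (scalef t F), derivable Ups t 1,
           (derive1 Ups x @[x --> t] --> derive1 Ups t)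
         & inG Gextra X0 X1 (scalef t F)]).

End Defs.

Definition dotv {R : realType} {d : nat} (a b : 'rV[R]_d) : R :=
  \sum_(i < d) a 0 i * b 0 i.

Definition Flin {R : realType} {T : Type} {d : nat} (psi : T -> 'rV[R]_d)
  (theta : 'rV[R]_d) : T -> R := fun y => dotv theta (psi y).

Definition Jbar {R : realType} (kappa m1 tp : R) : R := ln kappa / (m1 * tp).

(* Main.v *)
Require Import Defs.
From HB Require Import structures.
From mathcomp Require Import all_boot all_order all_algebra.
From mathcomp Require Import all_classical all_reals all_analysis.
From mathcomp Require Import measurable_realfun lebesgue_measure.
From mathcomp Require Import ring lra.
Import Order.TTheory GRing.Theory Num.Theory.
Import numFieldNormedType.Exports.
Local Open Scope classical_set_scope.
Local Open Scope ring_scope.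

Lemma expR_conv {R : realType} (l u w : R) : 0 <= l <= 1 ->
  expR (l * u + (1 - l) * w) <= l * expR u + (1 - l) * expR w.
Proof.
move=> /andP[l0 l1].
set m := l * u + (1 - l) * w.
have key : l * (1 + (u - m)) + (1 - l) * (1 + (w - m)) = 1 by rewrite /m; ring.
have h1 : expR m * (1 + (u - m)) <= expR u.
  have -> : expR u = expR m * expR (u - m) by rewrite -expRD addrC subrK.
  by apply: ler_wpM2l; [exact: expR_ge0|exact: expR_ge1Dx].
have h2 : expR m * (1 + (w - m)) <= expR w.
  have -> : expR w = expR m * expR (w - m) by rewrite -expRD addrC subrK.
  by apply: ler_wpM2l; [exact: expR_ge0|exact: expR_ge1Dx].
have -> : expR m = l * (expR m * (1 + (u - m))) + (1 - l) * (expR m * (1 + (w - m))).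
  transitivity (expR m * (l * (1 + (u - m)) + (1 - l) * (1 + (w - m))));
    [by rewrite key mulr1|ring].
apply: lerD; apply: ler_wpM2l => //; lra.
Qed.

Lemma pw_aux {R : realType} (l A B s1 s2 : R) : 0 <= l -> l <= 1 -> 0 < A -> 0 < B ->
  expR (- (l * ln A + (1 - l) * ln B)) * expR (l * s1 + (1 - l) * s2) <=
  l / A * expR s1 + (1 - l) / B * expR s2.
Proof.
move=> l0 l1 A0 B0.
have h := expR_conv l (s1 - ln A) (s2 - ln B) (introT andP (conj l0 l1)).
have e1 : expR (- (l * ln A + (1 - l) * ln B)) * expR (l * s1 + (1 - l) * s2) =
    expR (l * (s1 - ln A) + (1 - l) * (s2 - ln B)).
  by rewrite -expRD; congr expR; ring.
have e2 : expR (s1 - ln A) = expR s1 / A by rewrite expRD expRN lnK ?posrE.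
have e3 : expR (s2 - ln B) = expR s2 / B by rewrite expRD expRN lnK ?posrE.
rewrite e1; apply: (le_trans h); rewrite e2 e3.
have -> : l * (expR s1 / A) + (1 - l) * (expR s2 / B) =
  l / A * expR s1 + (1 - l) / B * expR s2 by ring.
by [].
Qed.

Section Aux.
Context {R : realType} {dO : measure_display} {Omega : measurableType dO}
  (P : probability Omega R) {dY : measure_display} {Y : measurableType dY}.
Variable X : nat -> Omega -> Y.
Hypothesis mX : forall k, measurable_fun setT (X k).

Lemma msumX (G : Y -> R) n : measurable_fun setT G ->
  measurable_fun setT (fun w => \sum_(k < n) G (X k w)).
Proof.
move=> mG; apply: measurable_sum => k.
exact: measurableT_comp mG (mX k).
Qed.

Lemma mexpX (G : Y -> R) n : measurable_fun setT G ->
  measurable_fun setT (fun w => (expR (\sum_(k < n) G (X k w)))%:E).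
Proof.
move=> mG; apply/measurable_EFinP.
apply: measurableT_comp; [exact: measurable_expR | exact: msumX].
Qed.

Lemma mexpXr (G : Y -> R) n : measurable_fun setT G ->
  measurable_fun setT (fun w => expR (\sum_(k < n) G (X k w))).
Proof.
move=> mG; apply: measurableT_comp; [exact: measurable_expR | exact: msumX].
Qed.

Lemma mgf_gt0 (G : Y -> R) n : measurable_fun setT G -> (0 < mgf_n P X G n)%E.
Proof.
move=> mG; rewrite /mgf_n lt0e integral_ge0 ?andbT; last first.
  by move=> w _; rewrite lee_fin expR_ge0.
apply/negP => /eqP H.
have : (\int[P]_w `|(expR (\sum_(k < n) G (X k w)))%:E|)%E = 0%E.
  rewrite -H; apply: eq_integral => w _.
  by rewrite gee0_abs // lee_fin expR_ge0.
move/(ae_eq_integral_abs _ measurableT (mexpX G n mG)) => [N [mN N0 sN]].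
have : (P setT <= P N)%E.
  apply: le_measure; rewrite ?inE //.
  move=> w _; apply: sN => /= /(_ I) /eqP.
  by rewrite eqe gt_eqF // expR_gt0.
by rewrite N0 probability_setT lee_fin ler10.
Qed.


Lemma mgf_shift (G : Y -> R) (c : R) n : measurable_fun setT G ->
  mgf_n P X (fun y => G y + c) n = ((expR (n%:R * c))%:E * mgf_n P X G n)%E.
Proof.
move=> mG; rewrite /mgf_n -(ge0_integralZl_EFin _ measurableT _ (mexpX G n mG));
  [|by move=> w _; rewrite lee_fin expR_ge0|exact: expR_ge0].
apply: eq_integral => w _; rewrite -EFinM -expRD big_split /= sumr_const card_ord.
by rewrite addrC mulr_natl.
Qed.

Lemma mgf_fin (G : Y -> R) n : measurable_fun setT G ->
  (mgf_n P X G n < +oo)%E -> mgf_n P X G n = (fine (mgf_n P X G n))%:E.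
Proof.
move=> mG lt; rewrite fineK // ge0_fin_numE // ltW //; exact: mgf_gt0.
Qed.

Lemma cgf_seq_shift (G : Y -> R) (c : R) n : measurable_fun setT G -> (0 < n)%N ->
  (mgf_n P X G n < +oo)%E ->
  cgf_seq P X (fun y => G y + c) n = cgf_seq P X G n + c.
Proof.
move=> mG n0 lt; rewrite /cgf_seq mgf_shift // (mgf_fin G n mG lt) -EFinM /=.
have m0 : 0 < fine (mgf_n P X G n) by apply: fine_gt0; rewrite mgf_gt0.
rewrite lnM ?posrE ?expR_gt0 // expRK.
have nn : n%:R != 0 :> R by rewrite pnatr_eq0 -lt0n.
rewrite mulrDl addrC; congr (_ + _).
by rewrite mulrAC mulfV // mul1r.
Qed.

Lemma cgf_shift (G : Y -> R) (c : R) : measurable_fun setT G -> cgf_exists P X G ->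
  cgf_exists P X (fun y => G y + c) /\ cgf P X (fun y => G y + c) = cgf P X G + c.
Proof.
move=> mG [fin cv].
have ev : \forall n \near \oo, cgf_seq P X G n + c = cgf_seq P X (fun y => G y + c) n.
  near=> n; rewrite cgf_seq_shift //; last by near: n.
  by near: n; exists 1%N.
have cv2 : (cgf_seq P X G n + c) @[n --> \oo] --> cgf P X G + c.
  by apply: cvgD => //; exact: cvg_cst.
have cv3 : cgf_seq P X (fun y => G y + c) n @[n --> \oo] --> cgf P X G + c.
  by apply: cvg_trans cv2; exact: near_eq_cvg.
split; [split|].
- near=> n; rewrite mgf_shift // -ge0_fin_numE; last first.
    by rewrite mule_ge0 // ?lee_fin ?expR_ge0 // ltW // mgf_gt0.
  rewrite fin_numM // ge0_fin_numE; [by near: n| exact/ltW/mgf_gt0].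
- exact: cvgP cv3.
- exact: cvg_lim cv3.
Unshelve. all: by end_near.
Qed.


Lemma cgf_seq_conv (G1 G2 : Y -> R) (l : R) (n : nat) :
  measurable_fun setT G1 -> measurable_fun setT G2 -> 0 <= l <= 1 -> (0 < n)%N ->
  (mgf_n P X G1 n < +oo)%E -> (mgf_n P X G2 n < +oo)%E ->
  cgf_seq P X (fun y => l * G1 y + (1 - l) * G2 y) n <=
  l * cgf_seq P X G1 n + (1 - l) * cgf_seq P X G2 n.
Proof.
move=> mG1 mG2 /andP[l0 l1] n0 f1 f2.
have mC : measurable_fun setT (fun y => l * G1 y + (1 - l) * G2 y).
  by apply: measurable_funD; apply: measurable_funM => //; exact: measurable_cst.
set A : R := fine (mgf_n P X G1 n); set B : R := fine (mgf_n P X G2 n).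
have A0 : 0 < A by apply: fine_gt0; rewrite mgf_gt0.
have B0 : 0 < B by apply: fine_gt0; rewrite mgf_gt0.
have hA : mgf_n P X G1 n = A%:E by rewrite /A -(mgf_fin G1 n mG1 f1).
have hB : mgf_n P X G2 n = B%:E by rewrite /B -(mgf_fin G2 n mG2 f2).
rewrite /cgf_seq hA hB /=.
clearbody A B.
set K : R := l * ln A + (1 - l) * ln B.
set S1 := fun w => \sum_(k < n) G1 (X k w).
set S2 := fun w => \sum_(k < n) G2 (X k w).
have sumeq w : \sum_(k < n) (l * G1 (X k w) + (1 - l) * G2 (X k w)) =
    l * S1 w + (1 - l) * S2 w by rewrite big_split /= -!mulr_sumr.
have pw w : expR (- K) * expR (l * S1 w + (1 - l) * S2 w) <=
    (l / A) * expR (S1 w) + ((1 - l) / B) * expR (S2 w).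
  exact: pw_aux.
have mL : measurable_fun setT (fun w => ((expR (- K))%:E *
    (expR (\sum_(k < n) (fun y => l * G1 y + (1 - l) * G2 y) (X k w)))%:E)%E).
  exact: (emeasurable_funM (measurable_cst _) (mexpX _ n mC)).
have mS1 : measurable_fun setT (fun w => expR (S1 w)) by exact: (mexpXr G1 n mG1).
have mS2 : measurable_fun setT (fun w => expR (S2 w)) by exact: (mexpXr G2 n mG2).
have I : ((expR (- K))%:E * mgf_n P X (fun y => (l * G1 y + (1 - l) * G2 y)%R) n <= 1)%E.
  rewrite /mgf_n -(ge0_integralZl_EFin _ measurableT _ (mexpX _ n mC));
    [|by move=> w _; rewrite lee_fin expR_ge0 | exact: expR_ge0].
  apply: (@le_trans _ _ (\int[P]_w ((l / A * expR (S1 w))%:E +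
                                     ((1 - l) / B * expR (S2 w))%:E))%E).
    refine (ge0_le_integral P measurableT _ mL _ _).
    - by move=> w _; rewrite -EFinM lee_fin mulr_ge0 ?expR_ge0.
    - apply: emeasurable_funD; apply/measurable_EFinP; apply: measurable_funM => //;
        exact: measurable_cst.
    - by move=> w _; rewrite -EFinM -EFinD lee_fin /= sumeq; exact: pw.
  have i1 : (\int[P]_w (l / A * expR (S1 w))%:E = (l / A)%:E * A%:E)%E.
    under eq_integral do rewrite EFinM.
    rewrite ge0_integralZl_EFin //; last by rewrite divr_ge0 // ltW.
    - by congr (_ * _)%E; rewrite -hA.
    - exact/measurable_EFinP.
  have i2 : (\int[P]_w ((1 - l) / B * expR (S2 w))%:E = ((1 - l) / B)%:E * B%:E)%E.
    under eq_integral do rewrite EFinM.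
    rewrite ge0_integralZl_EFin //; last by rewrite divr_ge0 ?subr_ge0 // ltW.
    - by congr (_ * _)%E; rewrite -hB.
    - exact/measurable_EFinP.
  rewrite ge0_integralD //.
  - rewrite i1 i2 -!EFinM -EFinD lee_fin !divfK ?gt_eqF //; lra.
  - by move=> w _; rewrite lee_fin mulr_ge0 ?expR_ge0 ?divr_ge0 // ltW.
  - by apply/measurable_EFinP; apply: measurable_funM => //; exact: measurable_cst.
  - by move=> w _; rewrite lee_fin mulr_ge0 ?expR_ge0 ?divr_ge0 ?subr_ge0 // ltW.
  - by apply/measurable_EFinP; apply: measurable_funM => //; exact: measurable_cst.
have M0 := mgf_gt0 _ n mC.
move: I M0.
case E : (mgf_n P X _ n) => [r| |] //; last first.
  by rewrite mulry gtr0_sg ?expR_gt0 // mul1e.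
rewrite -EFinM lee_fin lte_fin => I r0 /=.
have rK : r <= expR K.
  have := ler_wpM2l (expR_ge0 K) I.
  by rewrite mulr1 mulrA expRN mulfV ?gt_eqF ?expR_gt0 // mul1r.
have lnr : ln r <= K by rewrite -(expRK K) ler_ln ?posrE ?expR_gt0.
have -> : l * (ln A / n%:R) + (1 - l) * (ln B / n%:R) = K / n%:R by rewrite /K; ring.
by apply: ler_wpM2r => //; rewrite invr_ge0.
Qed.

Lemma cgf_conv (G1 G2 : Y -> R) (l : R) :
  measurable_fun setT G1 -> measurable_fun setT G2 -> 0 <= l <= 1 ->
  cgf_exists P X G1 -> cgf_exists P X G2 ->
  cgf_exists P X (fun y => l * G1 y + (1 - l) * G2 y) ->
  cgf P X (fun y => l * G1 y + (1 - l) * G2 y) <=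
  l * cgf P X G1 + (1 - l) * cgf P X G2.
Proof.
move=> mG1 mG2 l01 [fin1 cv1] [fin2 cv2] [_ cv3].
have cg : (l * cgf_seq P X G1 n + (1 - l) * cgf_seq P X G2 n) @[n --> \oo] -->
    l * cgf P X G1 + (1 - l) * cgf P X G2.
  have h1 : (l * cgf_seq P X G1 n) @[n --> \oo] --> l * cgf P X G1.
    exact: (cvgM (cvg_cst l) cv1).
  have h2 : ((1 - l) * cgf_seq P X G2 n) @[n --> \oo] --> (1 - l) * cgf P X G2.
    exact: (cvgM (cvg_cst (1 - l)) cv2).
  exact: (cvgD h1 h2).
rewrite -(cvg_lim _ cg) //; apply: ler_lim => //; first exact: cvgP cg.
near=> n; apply: cgf_seq_conv => //; last 2 first.
- by near: n.
- by near: n.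
- by near: n; exists 1%N.
Unshelve. all: by end_near.
Qed.


End Aux.

Lemma dotvDl {R : realType} {d : nat} (a b c : 'rV[R]_d) :
  dotv (a + b) c = dotv a c + dotv b c.
Proof. by rewrite /dotv -big_split; apply: eq_bigr => i _; rewrite mxE mulrDl. Qed.

Lemma dotvZl {R : realType} {d : nat} (k : R) (a c : 'rV[R]_d) :
  dotv (k *: a) c = k * dotv a c.
Proof. by rewrite /dotv mulr_sumr; apply: eq_bigr => i _; rewrite mxE mulrA. Qed.

Lemma dotvC {R : realType} {d : nat} (a c : 'rV[R]_d) : dotv a c = dotv c a.
Proof. by rewrite /dotv; apply: eq_bigr => i _; rewrite mulrC. Qed.

Lemma Flin_scale {R : realType} {dT : measure_display} {T : measurableType dT} {d : nat} (psi : T -> 'rV[R]_d) t th :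
  Flin psi (t *: th) = scalef t (Flin psi th).
Proof. by apply: funext => y; rewrite /Flin /scalef dotvZl. Qed.

Lemma Flin_shift {R : realType} {T : Type} {d : nat} (psi : T -> 'rV[R]_d) v th c :
  (forall y, dotv v (psi y) = 1) ->
  Flin psi (th + c *: v) = (fun y => Flin psi th y + c).
Proof.
by move=> Hv; apply: funext => y; rewrite /Flin dotvDl dotvZl Hv mulr1.
Qed.

Section Aux2.
Context {R : realType} {dO : measure_display} {Omega : measurableType dO}
  (P : probability Omega R) {dY : measure_display} {Y : measurableType dY}.

Lemma mFlin {d : nat} (psi : Y -> 'rV[R]_d) th :
  (forall i, measurable_fun setT (fun y => psi y 0 i)) ->
  measurable_fun setT (Flin psi th).
Proof.
move=> mp; rewrite /Flin /dotv; apply: measurable_sum => i.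
by apply: measurable_funM => //; exact: measurable_cst.
Qed.

Lemma marg_aff (X : nat -> Omega -> Y) (G : Y -> R) (a c : R) :
  marg_integrable P X G -> marg P X (fun y => a * G y + c) = a * marg P X G + c.
Proof.
move=> iG; rewrite /marg.
under eq_integral do rewrite EFinD EFinM.
rewrite integralD //; last exact: (finite_measure_integrable_cst P c measurableT).
  rewrite integralZl // (integral_cst P measurableT c%:E).
  rewrite [X in (c%:E * X)%E](_ : _ = 1%E); last exact: probability_setT.
  rewrite mule1.
  have fin := integrable_fin_num measurableT iG.
  by rewrite -(fineK fin) -EFinM -EFinD.
exact: integrableZl.
Qed.

End Aux2.

Lemma part1_aux {R : realType} (a b q m c rho : R) :
  a - (b - (rho - a)) + q <= rho + c - (m + c) + 0 ^+ 2 / 2 -> 0 <= q -> m <= b.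
Proof. rewrite expr0n /= mul0r addr0 => H q0; lra. Qed.

Lemma conv_aux {R : realType} (s0 tps rho : R) : 0 < s0 -> s0 < tps -> tps < 1 -> 0 < rho ->
  let l := (1 - tps) / (1 - s0) in
  0 <= l <= 1 /\ (forall F, l * (s0 * F) + (1 - l) * F = tps * F) /\
  ~ (rho <= l * 0 + (1 - l) * rho).
Proof.
move=> s00 st t1 r0 l.
have s01 : 0 < 1 - s0 by lra.
have l0 : 0 < l by apply: divr_gt0; lra.
have l1 : l <= 1 by rewrite /l ler_pdivrMr // mul1r; lra.
split; first by rewrite (ltW l0) l1.
split.
  move=> F; rewrite /l; field; lra.
rewrite mulr0 add0r => h.
have : 0 < l * rho by apply: mulr_gt0.
lra.
Qed.

Theorem propositiont (R : realType) (dO : measure_display) (Omega : measurableType dO)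
  (P : probability Omega R) (dY : measure_display) (Y : measurableType dY)
  (X0 X1 : nat -> Omega -> Y) (tau : Omega -> nat) (rho : R)
  (Gextra : (Y -> R) -> Prop)
  (d : nat) (psi : Y -> 'rV[R]_d) (Theta : set 'rV[R]_d) (v : 'rV[R]_d)
  (theta0 : 'rV[R]_d) :
  (* standing setting *)
  (forall k, measurable_fun setT (X0 k)) -> (forall k, measurable_fun setT (X1 k)) ->
  measurable_fun setT tau ->
  stationary P X0 -> stationary P X1 -> mutually_independent P X0 X1 tau ->
  (* (A2) *)
  0 < rho ->
  (fun n : nat => ln (fine (P [set w | (n <= tau w)%N])) / n%:R) @ \oo --> - rho ->
  (* (A4) *)
  open Theta ->
  (forall theta, Theta theta -> A3 P Gextra X0 X1 rho (Flin psi theta)) ->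
  (forall i : 'I_d, inG P Gextra X0 X1 (fun y => psi y 0 i)) ->
  (exists W : set (R * 'rV[R]_d), open W /\
     (forall theta tp, Theta theta -> is_tplus P X0 rho (Flin psi theta) tp ->
        forall t, 0 <= t <= tp -> W (t, theta)) /\
     let g := fun p : R * 'rV[R]_d => cgf P X0 (scalef p.1 (Flin psi p.2)) in
     (forall p, W p -> cgf_exists P X0 (scalef p.1 (Flin psi p.2))) /\
     (forall p, W p -> differentiable g p) /\
     (forall p h, W p -> ('d g q h @[q --> p] --> 'd g p h))) ->
  (forall y, dotv v (psi y) = 1) ->
  (* m_1^theta > 0 *)
  (forall theta, Theta theta -> 0 < marg P X1 (Flin psi theta)) ->
  (* theta0 is a minimizer of Gamma *)
  let Gamma := fun theta => cgf P X0 (Flin psi theta) - marg P X1 (Flin psi theta)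
                            + (dotv v theta) ^+ 2 / 2 in
  cgf_exists P X0 (Flin psi theta0) ->
  (forall theta, cgf_exists P X0 (Flin psi theta) -> Gamma theta0 <= Gamma theta) ->
  let r0 := rho - cgf P X0 (Flin psi theta0) in
  let thetas := theta0 + r0 *: v in
  Theta thetas ->
  forall kappa : R, 1 < kappa ->
  forall theta tp tps, Theta theta ->
    is_tplus P X0 rho (Flin psi theta) tp ->
    is_tplus P X0 rho (Flin psi thetas) tps ->
    Jbar kappa (marg P X1 (Flin psi thetas)) tps <= Jbar kappa (marg P X1 (Flin psi theta)) tp.
Proof.
move=> mX0 mX1 _ _ _ _ rho0 _ _ HA3 Hpsi _ Hv Hm1 Gamma cg0 Hmin r0 thetas Ths
  kappa k1 theta tp tps Th Htp Htps.
have mpsi i : measurable_fun setT (fun y => psi y 0 i) by case: (Hpsi i).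
have mF th : measurable_fun setT (Flin psi th) by exact: mFlin.
have mS th t : measurable_fun setT (scalef t (Flin psi th)).
  by apply: measurable_funM => //; exact: measurable_cst.
have intF th : Theta th -> marg_integrable P X1 (Flin psi th).
  by move=> /HA3 [[_ [_ [_ [_ [h _]]]]] _].
set Fs := Flin psi thetas.
have eFs : Fs = (fun y => Flin psi theta0 y + r0) by rewrite /Fs /thetas Flin_shift.
have [cgs_ex cgs] := cgf_shift P X0 mX0 _ r0 (mF theta0) cg0.
rewrite -eFs in cgs_ex cgs.
have cgsr : cgf P X0 Fs = rho by rewrite cgs /r0; ring.
have m0 : marg P X1 (Flin psi theta0) = marg P X1 Fs - r0.
  have -> : Flin psi theta0 = (fun y => 1 * Fs y + - r0).
    by apply: funext => y; rewrite eFs; ring.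
  by rewrite marg_aff ?mul1r //; exact: intF.
have [t0 [t00 [t0tp [_ [_ [cex cv]]]]]] := Htp.
have tp0 : 0 < tp by apply: lt_trans t0tp.
have [w _] : exists w : Omega, True.
  have [//|no] := pselect (exists w : Omega, True).
  have e : [set: Omega] = set0.
    by apply/seteqP; split => x // _; apply: no; exists x.
  have := probability_setT P; rewrite e measure0 => /eqP.
  by rewrite eq_sym onee_eq0.
set vv := dotv v v.
have vv0 : vv != 0.
  apply/negP => /eqP vv0.
  have hv i : v 0 i = 0.
    have h0 : forall j : 'I_d, xpredT j -> 0 <= v 0 j * v 0 j.
      by move=> j _; rewrite -expr2 sqr_ge0.
    have := psumr_eq0P h0 vv0 (i := i) isT.
    by move=> /eqP; rewrite -expr2 sqrf_eq0 => /eqP.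
  have := Hv (X0 0%N w); rewrite /dotv big1 ?hv => [|i _]; last by rewrite hv mul0r.
  by move=> /eqP; rewrite eq_sym oner_eq0.
set phi := tp *: theta.
have ephi : Flin psi phi = scalef tp (Flin psi theta) by rewrite Flin_scale.
set c := - dotv v phi / vv.
set ps := phi + c *: v.
have eps : Flin psi ps = (fun y => scalef tp (Flin psi theta) y + c).
  by rewrite /ps Flin_shift // ephi.
have [cps_ex cps] := cgf_shift P X0 mX0 _ c (mS theta tp) cex.
rewrite -eps in cps_ex cps.
have mps : marg P X1 (Flin psi ps) = tp * marg P X1 (Flin psi theta) + c.
  by rewrite eps; exact: (marg_aff P X1 (Flin psi theta) tp c (intF _ Th)).
have dps : dotv v ps = 0.
  rewrite /ps dotvC dotvDl !dotvZl -/vv /c /phi (dotvC v (tp *: theta)) dotvZl divfK //.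
  by rewrite subrr.
have H := Hmin ps cps_ex.
rewrite /Gamma mps dps cps cv in H.
have sq : 0 <= dotv v theta0 ^+ 2 / 2 by rewrite divr_ge0 // sqr_ge0.
rewrite m0 /r0 in H.
have part1 : tp * marg P X1 (Flin psi theta) <= marg P X1 Fs.
  exact: part1_aux H sq.
have [s0 [s00 [s0lt [cex0 [cv0 [cexs cvs]]]]]] := Htps.
have tps1 : 1 <= tps.
  rewrite leNgt; apply/negP => lt1.
  have [l01 [ecomb nh]] := conv_aux _ _ _ s00 s0lt lt1 rho0.
  move: l01 ecomb nh.
  set l := (1 - tps) / (1 - s0) => l01 ecomb nh.
  have ec : (fun y => l * scalef s0 Fs y + (1 - l) * Fs y) = scalef tps Fs.
    by apply: funext => y; rewrite /scalef ecomb.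
  have := cgf_conv P X0 mX0 _ _ l (mS thetas s0) (mF thetas) l01 cex0 cgs_ex.
  by rewrite ec cv0 cvs cgsr => /(_ cexs).
have ms0 := Hm1 thetas Ths; have mt0 := Hm1 theta Th.
rewrite /Jbar; apply: ler_wpM2l; first exact/ln_ge0/ltW.
rewrite lef_pV2 ?posrE ?mulr_gt0 //; last by apply: lt_le_trans tps1.
rewrite [X in X <= _]mulrC; apply: le_trans part1 _; rewrite -{1}[marg P X1 Fs]mulr1.
by apply: ler_wpM2l => //; exact: ltW.
Qed.
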